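(* Let $M\ge2$ and consider a hierarchical system as described in the context, with $L=\sum_{l=1}^ML^{(l)}$. Let $x^{(1)}:[0,\infty)\to\mathbb{R}^{N^{(1)}}$ be the solution of $\dot x^{(1)}=-Lx^{(1)}$, $x^{(1)}(0)=x^{(1)}_0$. Then \[ \lim_{t\to\infty}x^{(1)}(t)=\frac{\mathbf{1}\mathbf{1}^TK}{\mathbf{1}^TK\mathbf{1}}\,x^{(1)}_0,\qquad K=\mathrm{diag}(a_1,\dots,a_{N^{(1)}}), \] where $\mathbf 1$ is the all-ones vector in $\mathbb{R}^{N^{(1)}}$. In particular, if $a_i=a_j$ for all $i,j$, all components of $x^{(1)}(t)$ converge to the average of the components of $x^{(1)}_0$.
   Context: Hierarchical structure. Fix an integer $M\ge 2$ and positive integers $N^{(1)},\dots,N^{(M)}$; set $N^{(M+1)}:=1$. For each $l\in\{1,\dots,M\}$ the $N^{(l)}$ nodes of layer $l$ are partitioned into $N^{(l+1)}$ groups $G^{(l)}_1,\dots,G^{(l)}_{N^{(l+1)}}$ of sizes $k^{(l)}_p\ge1$ (so $\sum_pk^{(l)}_p=N^{(l)}$), numbered consecutively: group $G^{(l)}_p$ consists of nodes $\sum_{m<p}k^{(l)}_m+1,\dots,\sum_{m\le p}k^{(l)}_m$ of layer $l$. Each group $G^{(l)}_p$ carries a connected undirected graph with binary adjacency matrix; $L^{(l)}_p$ is its Laplacian (degree matrix minus adjacency matrix), and $L^{(l)}_D=\mathrm{diag}(L^{(l)}_1,\dots,L^{(l)}_{N^{(l+1)}})$ (block diagonal). Weights: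 positive constants $a_1,\dots,a_{N^{(1)}}$; $a^{(1)}_i=a_i$, $a^{(l+1)}_p=\sum_{i\in G^{(l)}_p}a^{(l)}_i$; $K^{(l)}=\mathrm{diag}(a^{(l)}_1,\dots,a^{(l)}_{N^{(l)}})^{-1}$. For $l=1,\dots,M-1$: $B^{(l)}=\mathrm{diag}(\mathbf{1}_{k^{(l)}_1},\dots,\mathbf{1}_{k^{(l)}_{N^{(l+1)}}})\in\mathbb{R}^{N^{(l)}\times N^{(l+1)}}$ ($\mathbf 1_k$ all-ones column vector), $C^{(l)}=\mathrm{diag}(C^{(l)}_1,\dots,C^{(l)}_{N^{(l+1)}})\in\mathbb{R}^{N^{(l+1)}\times N^{(l)}}$ with each $C^{(l)}_p\in\mathbb{R}^{1\times k^{(l)}_p}$ having nonnegative entries summing to $1$. $L^{(1)}=K^{(1)}L^{(1)}_D$ and $L^{(l)}=B^{(1)}\cdots B^{(l-1)}K^{(l)}L^{(l)}_DC^{(l-1)}\cdots C^{(1)}$ for $l=2,\dots,M$. (The equation $\dot x^{(1)}=-Lx^{(1)}$ is the hierarchical system without interlayer delays.) *)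

(* Defs.v *)
From HB Require Import structures.
From mathcomp Require Import all_boot all_order all_algebra.
From mathcomp Require Import all_classical all_reals all_analysis.
Unset Printing Implicit Defensive.
Import Order.TTheory GRing.Theory Num.Theory.
Local Open Scope ring_scope.

(* Layers are indexed 0..M-1 here (paper: 1..M); N l = N^(l+1), and
   N M plays the role of N^(M+1) = 1.  The partition of layer l into the
   N (l+1) groups is encoded by the group-assignment map
   g l : 'I_(N l) -> 'I_(N l.+1)  (node i belongs to group g l i). *)

Section Hier.
Variable R : realType.
Variable N : nat -> nat.
Variable g : forall l, 'I_(N l) -> 'I_(N l.+1).

(* B^(l) = diag(1_{k_1},...,1_{k_{N^(l+1)}}) *)
Definition grpB l : 'M[R]_(N l, N l.+1) := \matrix_(i, p) (g l i == p)%:R.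

Fixpoint Bchain l : 'M[R]_(N 0%N, N l) :=
  match l return 'M[R]_(N 0%N, N l) with
  | 0%N => 1%:M
  | l'.+1 => Bchain l' *m grpB l'
  end.

Fixpoint Cchain (C : forall l, 'M[R]_(N l.+1, N l)) l : 'M[R]_(N l, N 0%N) :=
  match l return 'M[R]_(N l, N 0%N) with
  | 0%N => 1%:M
  | l'.+1 => C l' *m Cchain C l'
  end.

Fixpoint wts (a : 'I_(N 0%N) -> R) l : 'I_(N l) -> R :=
  match l return 'I_(N l) -> R with
  | 0%N => a
  | l'.+1 => fun p => \sum_(i | g l' i == p) wts a l' i
  end.

Definition Kmat (a : 'I_(N 0%N) -> R) l : 'M[R]_(N l) :=
  diag_mx (\row_i (wts a l i)^-1).

End Hier.

Definition laplacian (R : realType) n (e : rel 'I_n) : 'M[R]_n :=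
  diag_mx (\row_i (\sum_j ((e i j)%:R : R))) - \matrix_(i, j) ((e i j)%:R : R).

Definition layerL (R : realType) (N : nat -> nat)
  (g : forall l, 'I_(N l) -> 'I_(N l.+1)) (a : 'I_(N 0%N) -> R)
  (adj : forall l, rel 'I_(N l)) (C : forall l, 'M[R]_(N l.+1, N l)) l
  : 'M[R]_(N 0%N) :=
  Bchain R N g l *m Kmat R N g a l *m laplacian R (N l) (adj l) *m Cchain R N C l.

Definition hierL (R : realType) (N : nat -> nat)
  (g : forall l, 'I_(N l) -> 'I_(N l.+1)) (a : 'I_(N 0%N) -> R)
  (adj : forall l, rel 'I_(N l)) (C : forall l, 'M[R]_(N l.+1, N l)) (M : nat)
  : 'M[R]_(N 0%N) :=
  \sum_(l < M) layerL R N g a adj C l.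

(* Main.v *)
Require Import Defs.
From HB Require Import structures.
From mathcomp Require Import all_boot all_order all_algebra.
From mathcomp Require Import all_classical all_reals all_analysis.
From mathcomp Require Import ring lra.
From mathcomp Require Import complex.
From mathcomp Require Import zify.
Import Order.TTheory GRing.Theory Num.Theory.
Import numFieldNormedType.Exports.
Local Open Scope ring_scope.
Local Open Scope classical_set_scope.
Section ODE. Variable R : realType.

Lemma cont_within (f : R -> R) (a b : R) : 0 < a ->
  (forall t, 0 < t -> derivable f t 1) -> {within `[a, b], continuous f}.
Proof.
move=> a0 df; apply: continuous_in_subspaceT => x.
rewrite inE /= in_itv /= => /andP [ax _].
apply/differentiable_continuous/derivable1_diffP/df.
exact: lt_le_trans a0 ax.
Qed.

Lemma deriv_psi (f : R -> R) (df r c t : R) : is_derive t 1 f df ->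
  is_derive t 1 (fun s => expR (r * s) * (f s - c)) (expR (r * t) * (r * (f t - c) + df)).
Proof.
move=> H.
have hg : is_derive t 1 (fun s : R => r * s) r.
  have := @is_deriveZ R R R id r t 1 1 (is_derive_id _ _).
  by rewrite /= scaler1.
have hE : is_derive t 1 (fun s => expR (r * s)) (expR (r * t) * r).
  exact: (@is_derive1_comp R expR (fun s => r * s)).
have hf : is_derive t 1 (fun s => f s - c) (df - 0).
  exact: is_deriveB.
have := is_deriveM hE hf.
rewrite subr0 => H2.
apply: (@DeriveDef _ _ _ _ _ _ _).
  exact: (@ex_derive _ _ _ _ _ _ _ H2).
rewrite (@derive_val _ _ _ _ _ _ _ H2) /=.
have sE (u v : R) : u *: v = u * v by [].
rewrite !sE; ring.
Qed.

Lemma ode1 (f h : R -> R) (r m : R) : 0 < r ->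
  (forall t : R, 0 < t -> is_derive t 1 f (- (h t + r * f t))) ->
  h t @[t --> +oo] --> m -> f t @[t --> +oo] --> - (m / r).
Proof.
move=> r0 df hm; apply/cvgrPdist_le => e e0.
have eta0 : 0 < r * e / 2 by rewrite divr_gt0 // mulr_gt0.
have [T [_ HT]] := (cvgrPdist_le _ _).1 hm _ eta0.
pose T1 := Num.max T 0 + 1.
have hmx : T <= Num.max T 0 by rewrite le_max lexx.
have hmx0 : 0 <= Num.max T 0 by rewrite le_max lexx orbT.
have T1T : T < T1 by rewrite /T1; lra.
have T10 : 0 < T1 by rewrite /T1; lra.
pose psi c t := expR (r * t) * (f t - c).
have dpsi (c t : R) : 0 < t -> is_derive t 1 (psi c) (expR (r * t) * (r * (f t - c) + - (h t + r * f t))).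
  by move=> t0; apply: deriv_psi; apply: df.
have cpsi (c b : R) : {within `[T1, b], continuous (psi c)}.
  apply: cont_within => // t t0.
  exact: (@ex_derive _ _ _ _ _ _ _ (dpsi c t t0)).
have dpsiE (c t : R) : 0 < t -> (psi c)^`() t = expR (r * t) * (- r * c - h t).
  move=> t0; rewrite derive1E (@derive_val _ _ _ _ _ _ _ (dpsi c t t0)).
  congr (_ * _); ring.
have hTt (t : R) : T1 < t -> T < t by move=> ?; lra.
have ht (t : R) : T < t -> `|m - h t| <= r * e / 2 by move=> /HT.
set c1 := - (m / r) + e / 2.
set c2 := - (m / r) - e / 2.
have mono1 (t : R) : T1 <= t -> psi c1 t <= psi c1 T1.
  move=> Tt; apply: (@ler0_derive1_nincr _ _ T1 t) => //.
  - move=> x; rewrite in_itv /= => /andP [x1 _].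
    exact: (@ex_derive _ _ _ _ _ _ _ (dpsi c1 x (lt_trans T10 x1))).
  - move=> x; rewrite in_itv /= => /andP [x1 _].
    rewrite dpsiE; last exact: (lt_trans T10 x1).
    apply: mulr_ge0_le0; first exact: expR_ge0.
    have := ht x (hTt x x1); rewrite /c1 => /ler_normlP [hA hB].
    have -> : - r * (- (m / r) + e / 2) = m - r * e / 2 by field; rewrite gt_eqF.
    lra.
have mono2 (t : R) : T1 <= t -> psi c2 T1 <= psi c2 t.
  move=> Tt; apply: (@ger0_derive1_ndecr _ _ T1 t) => //.
  - move=> x; rewrite in_itv /= => /andP [x1 _].
    exact: (@ex_derive _ _ _ _ _ _ _ (dpsi c2 x (lt_trans T10 x1))).
  - move=> x; rewrite in_itv /= => /andP [x1 _].
    rewrite dpsiE; last exact: (lt_trans T10 x1).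
    apply: mulr_ge0; first exact: expR_ge0.
    have := ht x (hTt x x1); rewrite /c2 => /ler_normlP [hA hB].
    have -> : - r * (- (m / r) - e / 2) = m + r * e / 2 by field; rewrite gt_eqF.
    lra.
pose K := `|psi c1 T1| + `|psi c2 T1|.
have K0 : 0 <= K by rewrite addr_ge0.
pose T2 := T1 + 2 * K / (r * e).
have T2T1 : T1 <= T2 by rewrite /T2 lerDl divr_ge0 // ?mulr_ge0 // ltW // mulr_gt0.
exists T2; split; first exact: num_real.
move=> t tT2.
have tT1 : T1 <= t by apply: ltW; exact: le_lt_trans T2T1 tT2.
have t0 : 0 < t by exact: lt_le_trans T10 tT1.
have Et : 0 < expR (r * t) := expR_gt0 _.
have Ege : r * t <= expR (r * t).
  by have := expR_ge1Dx (r * t); lra.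
have tK : 2 * K / (r * e) <= t by rewrite /T2 in tT2; lra.
have re0 : 0 < r * e by rewrite mulr_gt0.
have H1 : 2 * K <= t * (r * e) by rewrite -ler_pdivrMr.
have H2 : e / 2 * (r * t) <= e / 2 * expR (r * t) by rewrite ler_pM2l // divr_gt0.
have hK : K <= e / 2 * expR (r * t).
  apply: le_trans H2; have -> : e / 2 * (r * t) = t * (r * e) / 2 by ring.
  lra.
have h1 := mono1 t tT1; have h2 := mono2 t tT1.
rewrite /psi in h1 h2.
have k1 : psi c1 T1 <= K by rewrite /K (le_trans (ler_norm _)) // lerDl.
have k2 : - K <= psi c2 T1.
  have := ler_norm (- psi c2 T1); rewrite normrN /K; have := normr_ge0 (psi c1 T1); lra.
have a1 : (f t - c1) * expR (r * t) <= e / 2 * expR (r * t).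
  by rewrite [X in X <= _]mulrC; apply: le_trans h1 _; apply: le_trans k1 hK.
have a2 : - (e / 2) * expR (r * t) <= (f t - c2) * expR (r * t).
  rewrite [X in _ <= X]mulrC; apply: le_trans _ h2; apply: le_trans _ k2.
  by rewrite mulNr lerN2.
rewrite ler_pM2r // in a1; rewrite ler_pM2r // in a2.
rewrite /c1 /c2 in a1 a2.
rewrite ler_norml; apply/andP; split; lra.
Qed.


Lemma cvg_entries m n (F : set_system R) (FF : Filter F) (y : R -> 'M[R]_(m, n)) (l : 'M[R]_(m, n)) :
  (forall i j, (fun t => y t i j) @ F --> l i j) -> y @ F --> l.
Proof.
move=> H; apply/cvgrPdist_le => e e0.
near=> t.
rewrite /Num.Def.normr/= mx_normrE (bigmax_le _ (ltW e0))//= => ij _.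
rewrite !mxE/=.
move: ij; near: t; apply: filter_forall => /= ij.
exact: ((cvgrPdist_le _ _).1 (H ij.1 ij.2)) e e0.
Unshelve. all: by end_near. Qed.

Lemma entry_cvg m n (F : set_system R) (FF : Filter F) (y : R -> 'M[R]_(m, n)) (l : 'M[R]_(m, n)) i j :
  y @ F --> l -> (fun t => y t i j) @ F --> l i j.
Proof.
move=> H. 
exact: (@continuous_cvg _ _ _ _ FF y (fun M : 'M[R]_(m, n) => M i j) l (@coord_continuous R m n i j l) H).
Qed.

Lemma entry_derive m n (y : R -> 'M[R]_(m, n)) (t : R) D i j :
  is_derive t 1 y D -> is_derive t 1 (fun s => y s i j) (D i j).
Proof.
move=> [dy Dy].
have := (derivable_mxP y t 1).1 dy i j => dij.
apply: (@DeriveDef _ _ _ _ _ _ _) => //.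
by rewrite -Dy derive_mx // mxE.
Qed.

Lemma entry_mul_derive n p (A : 'M[R]_(n, p)) (y : R -> 'cV[R]_p) (t : R) (D : 'cV[R]_p) i :
  (forall j, is_derive t 1 (fun s => y s j 0) (D j 0)) ->
  is_derive t 1 (fun s => (A *m y s) i 0) ((A *m D) i 0).
Proof.
move=> H.
have -> : (fun s => (A *m y s) i 0) = \sum_(j < p) (fun s => A i j * y s j 0).
  by rewrite fct_sumE; apply/funext => s; rewrite mxE.
rewrite mxE.
apply: is_derive_sum.
Qed.

Lemma ode_vec n (L : 'M[R]_n) (s : seq R) : all (fun r => 0 < r) s ->
  forall (y : R -> 'cV[R]_n) (l : 'cV[R]_n),
  (forall t : R, 0 < t -> forall i, is_derive t 1 (fun u => y u i 0) ((- (L *m y t)) i 0)) ->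
  (fun t => \prod_(r <- s) (L - r%:M) *m y t) @ +oo --> l ->
  y t @[t --> +oo] --> (\prod_(r <- s) (- r))^-1 *: l.
Proof.
elim/last_ind: s => [|s r0 IH].
  move=> _ y l _; rewrite !big_nil invr1 scale1r.
  by under eq_fun do rewrite mul1mx.
rewrite all_rcons => /andP [r00 Hs] y l dy cy.
pose y1 t := (L - r0%:M) *m y t.
have dy1 : forall t : R, 0 < t -> forall i, is_derive t 1 (fun u => y1 u i 0) ((- (L *m y1 t)) i 0).
  move=> t t0 i; apply: is_derive_eq.
    exact: (@entry_mul_derive _ _ (L - r0%:M) y t _ i (dy t t0)).
  rewrite /y1 mulmxN mulmxA mulmxBl mulmxBr scalar_mxC.
  by rewrite mulmxBl !mulmxA.
have cy1 : (fun t => \prod_(r <- s) (L - r%:M) *m y1 t) @ +oo --> l.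
  move: cy; rewrite -cats1 big_cat big_seq1 /=.
  by under eq_fun do rewrite -mulmxE -mulmxA.
have {IH} := IH Hs y1 l dy1 cy1.
set k := (\prod_(r <- s) (- r))^-1 => Hy1.
apply: cvg_entries => i j.
rewrite (ord1 j).
have := @ode1 (fun t => y t i 0) (fun t => y1 t i 0) r0 ((k *: l) i 0) r00.
have P0 : \prod_(r <- s) (- r) != 0.
  rewrite prodf_seq_neq0; apply/allP => r rs /=; rewrite oppr_eq0 gt_eqF //.
  exact: (allP Hs r rs).
move=> H.
have -> : ((\prod_(r <- rcons s r0) - r)^-1 *: l) i 0 = - ((k *: l) i 0 / r0).
  rewrite -cats1 big_cat big_seq1 /= !mxE /k; field; rewrite P0 gt_eqF //.
apply: H.
  move=> t t0; apply: is_derive_eq; first exact: dy.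
  rewrite /y1 mulmxBl mul_scalar_mx !mxE; ring.
exact: entry_cvg.
Qed.

Lemma const_pos (f : R -> R) : (forall t : R, 0 < t -> is_derive t 1 f 0) ->
  forall t : R, 0 < t -> f t = f 1.
Proof.
move=> df.
have dv (u : R) : 0 < u -> derivable f u 1.
  by move=> u0; exact: (@ex_derive _ _ _ _ _ _ _ (df u u0)).
have d0 (u : R) : 0 < u -> f^`() u = 0.
  by move=> u0; rewrite derive1E (@derive_val _ _ _ _ _ _ _ (df u u0)).
have key (s t : R) : 0 < s -> s <= t -> f t = f s.
  move=> s0 st; apply/eqP; rewrite eq_le; apply/andP; split.
  - apply: (@ler0_derive1_nincr _ f s t) => //.
    + by move=> u; rewrite in_itv /= => /andP [su _]; apply: dv (lt_trans s0 su).
    + by move=> u; rewrite in_itv /= => /andP [su _]; rewrite d0 // (lt_trans s0 su).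
    + by apply: cont_within => // u u0; apply: dv.
  - apply: (@ger0_derive1_ndecr _ f s t) => //.
    + by move=> u; rewrite in_itv /= => /andP [su _]; apply: dv (lt_trans s0 su).
    + by move=> u; rewrite in_itv /= => /andP [su _]; rewrite d0 // (lt_trans s0 su).
    + by apply: cont_within => // u u0; apply: dv.
move=> t t0; case: (leP 1 t) => [t1|t1]; first exact: key.
by symmetry; apply: key => //; exact: ltW.
Qed.

Lemma cvg_lin (F : set_system R) (FF : Filter F) n (c : 'I_n -> R) (f : 'I_n -> R -> R) (l : 'I_n -> R) :
  (forall j, f j t @[t --> F] --> l j) ->
  (\sum_j c j * f j t) @[t --> F] --> \sum_j c j * l j.
Proof.
elim: n c f l => [|n IH] c f l H.
  rewrite big_ord0; under eq_fun do rewrite big_ord0.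
  exact: cvg_cst.
rewrite big_ord_recr /=; under eq_fun do rewrite big_ord_recr /=.
apply: cvgD.
  by apply: IH => j; exact: H.
by apply: cvgM; [exact: cvg_cst | exact: H].
Qed.

End ODE.

Lemma char_poly_tr (F : comNzRingType) n (A : 'M[F]_n) : char_poly A^T = char_poly A.
Proof.
rewrite /char_poly -det_tr; congr (\det _).
by apply/matrixP => i j; rewrite /char_poly_mx !mxE eq_sym.
Qed.

Section CP. Variable R : realType.
Local Notation toC := (real_complex R).

Lemma charfact n (A : 'M[R]_n) :
  (forall (z : R[i]) (u : 'cV[R[i]]_n), u != 0 -> map_mx toC A *m u = z *: u -> 0 <= z) ->
  exists k, exists s : seq R, all (fun r => 0 < r) s /\ A ^+ k * \prod_(r <- s) (A - r%:M) = 0.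
Proof.
case: n A => [|n] A H.
  by exists 0%N, [::]; split => //; apply/matrixP => [[]].
set p := char_poly A.
have [rs Hrs] := closed_field_poly_normal (map_poly toC p).
have mon : lead_coef (map_poly toC p) = 1.
  by apply/monicP; rewrite map_monic char_poly_monic.
rewrite mon scale1r in Hrs.
have rs_ge0 z : z \in rs -> 0 <= z.
  move=> zrs.
  have : root (map_poly toC p) z by rewrite Hrs root_prod_XsubC.
  rewrite /p map_char_poly -char_poly_tr -eigenvalue_root_char => /eigenvalueP [v Hv v0].
  apply: (H z v^T); first by rewrite trmx_eq0.
  by rewrite -[map_mx _ _]trmxK -trmx_mul Hv linearZ.
pose rsR := map (@complex.Re R) rs.
have Hp : p = \prod_(r <- rsR) ('X - r%:P).
  apply: (@map_poly_inj _ _ toC); rewrite Hrs rmorph_prod big_map.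
  apply: eq_big_seq => z zrs.
  by rewrite rmorphB /= map_polyX map_polyC /= (RRe_real (ger0_real (rs_ge0 z zrs))).
have rsR_ge0 r : r \in rsR -> 0 <= r.
  move=> /mapP [z zrs ->]; have := rs_ge0 z zrs; rewrite lecE => /andP [_].
  by [].
exists (count (fun r => r == 0) rsR), [seq r <- rsR | r != 0]; split.
  apply/allP => r; rewrite mem_filter => /andP [r0 rr].
  by rewrite lt0r r0 rsR_ge0.
have := Cayley_Hamilton A; rewrite -/p Hp (bigID (fun r => r == 0)) /=.
rewrite (eq_bigr (fun _ => 'X)); last by move=> r /eqP ->; rewrite subr0.
rewrite big_const_seq iter_mulr_1 -big_filter.
rewrite rmorphM rmorphXn /= horner_mx_X rmorph_prod.
by under eq_bigr do rewrite rmorphB /= horner_mx_X horner_mx_C.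
Qed.
End CP.

Lemma Lap_mul (R : realType) (S : comNzRingType) (f : {rmorphism R -> S}) n (e : rel 'I_n) m
  (v : 'M[S]_(n, m)) i k :
  (map_mx f (laplacian R n e) *m v) i k = \sum_j (e i j)%:R * (v i k - v j k).
Proof.
rewrite mxE.
under eq_bigr do rewrite !mxE rmorphB /= rmorphMn rmorph_nat rmorph_sum mulrBl.
rewrite sumrB [X in X - _](bigD1 i) //= eqxx mulr1n.
rewrite [X in _ + X - _]big1 ?addr0; last first.
  by move=> j ij; rewrite eq_sym (negbTE ij) mulr0n mul0r.
rewrite mulr_suml -sumrB; apply: eq_bigr => j _.
by rewrite rmorph_nat mulrBr.
Qed.

Lemma Lap_mulR (R : realType) n (e : rel 'I_n) m (v : 'M[R]_(n, m)) i k :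
  (laplacian R n e *m v) i k = \sum_j (e i j)%:R * (v i k - v j k).
Proof.
by rewrite -(@Lap_mul R R idfun) map_mx_id.
Qed.

Section Hier.
Variables (R : realType) (M : nat) (N : nat -> nat)
  (g : forall l, 'I_(N l) -> 'I_(N l.+1)) (a : 'I_(N 0%N) -> R)
  (adj : forall l, rel 'I_(N l)) (C : forall l, 'M[R]_(N l.+1, N l)).
Hypothesis HNM : N M = 1%N.
Hypothesis Hsurj : forall l, (l < M)%N -> forall p : 'I_(N l.+1), exists i, g l i = p.
Hypothesis Hsym : forall l, (l < M)%N -> symmetric (adj l).
Hypothesis Hgrp : forall l, (l < M)%N -> forall i j, adj l i j -> g l i = g l j.
Hypothesis Hconn : forall l, (l < M)%N -> forall i j, g l i = g l j -> connect (adj l) i j.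
Hypothesis Ha : forall i, 0 < a i.
Hypothesis HCs : forall l, (l.+1 < M)%N -> forall p i, g l i != p -> C l p i = 0.
Hypothesis HC1 : forall l, (l.+1 < M)%N -> forall p, \sum_i C l p i = 1.

Local Notation B := (Bchain R N g).
Local Notation G := (grpB R N g).
Local Notation Cc := (Cchain R N C).
Local Notation W := (wts R N g a).
Local Notation K := (Kmat R N g a).
Local Notation Lap l := (laplacian R (N l) (adj l)).
Local Notation L := (hierL R N g a adj C M).

Lemma W_pos l : (l <= M)%N -> forall i, 0 < W l i.
Proof.
elim: l => [|l IH] Hl i /=; first exact: Ha.
have [j <-] := Hsurj l Hl i.
rewrite (bigD1 j) //=.
apply: (lt_le_trans (IH (ltnW Hl) j)); rewrite lerDl sumr_ge0 // => k _.
exact: ltW (IH (ltnW Hl) k).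
Qed.

Lemma G_entry l i p : G l i p = (g l i == p)%:R.
Proof. by rewrite mxE. Qed.

Lemma LapG l : (l < M)%N -> Lap l *m G l = 0.
Proof.
move=> Hl; apply/matrixP => i p; rewrite Lap_mulR [RHS]mxE; apply: big1 => j _.
case E: (adj l i j); last by rewrite mul0r.
by rewrite !G_entry (Hgrp l Hl _ _ E) subrr mulr0.
Qed.

Lemma Lap1 l m : Lap l *m (const_mx 1 : 'M[R]_(N l, m)) = 0.
Proof.
by apply/matrixP => i p; rewrite Lap_mulR [RHS]mxE; apply: big1 => j _; rewrite !mxE subrr mulr0.
Qed.

Lemma Lap_entry l i j : Lap l i j = (i == j)%:R * \sum_k ((adj l i k)%:R) - (adj l i j)%:R.
Proof. by rewrite !mxE mulr_natl. Qed.

Lemma Lap_tr l : (l < M)%N -> (Lap l)^T = Lap l.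
Proof.
move=> Hl; apply/matrixP => i j; rewrite mxE !Lap_entry.
have [->|ij] := eqVneq i j; first by [].
by rewrite !mul0r (Hsym l Hl).
Qed.

Lemma CG l : (l.+1 < M)%N -> C l *m G l = 1%:M.
Proof.
move=> Hl; apply/matrixP => p q; rewrite !mxE.
have E i : C l p i * G l i q = C l p i * (p == q)%:R.
  rewrite G_entry; have [gi|gi] := eqVneq (g l i) p.
    by rewrite gi.
  by rewrite HCs // !mul0r.
under eq_bigr do rewrite E.
by rewrite -mulr_suml HC1 // mul1r.
Qed.

Lemma CcB l : (l < M)%N -> Cc l *m B l = 1%:M.
Proof.
elim: l => [|l IH] Hl /=; first by rewrite mul1mx.
rewrite -!mulmxA (mulmxA (Cc l)) IH ?(ltnW Hl) // mul1mx CG //.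
Qed.

Lemma C1 l : (l.+1 < M)%N -> C l *m (const_mx 1 : 'cV[R]_(N l)) = const_mx 1.
Proof.
move=> Hl; apply/matrixP => p q; rewrite mxE.
under eq_bigr do rewrite mxE mulr1.
by rewrite mxE HC1.
Qed.

Lemma Cc1 l : (l < M)%N -> Cc l *m (const_mx 1 : 'cV[R]_(N 0%N)) = const_mx 1.
Proof.
elim: l => [|l IH] Hl /=; first by rewrite mul1mx.
by rewrite -mulmxA IH ?(ltnW Hl) // C1.
Qed.

Lemma aB l : (\row_i a i) *m B l = \row_p W l p.
Proof.
elim: l => [|l IH] /=; first by rewrite mulmx1; apply/rowP => i; rewrite !mxE.
rewrite mulmxA IH; apply/rowP => p; rewrite !mxE [RHS]big_mkcond /=.
by apply: eq_bigr => i _; rewrite !mxE; case: (g l i == p); rewrite ?mulr1 ?mulr0.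
Qed.

Lemma WK l : (l <= M)%N -> (\row_p W l p) *m K l = const_mx 1.
Proof.
move=> Hl; apply/rowP => p; rewrite /Kmat mul_mx_diag !mxE divff //.
by rewrite gt_eqF // W_pos.
Qed.

Lemma oneLap l : (l < M)%N -> (const_mx 1 : 'rV[R]_(N l)) *m Lap l = 0.
Proof.
move=> Hl; apply: trmx_inj; rewrite trmx_mul Lap_tr // trmx_const Lap1 trmx0.
by [].
Qed.

Lemma aL : (\row_i a i) *m L = 0.
Proof.
rewrite /hierL mulmx_sumr big1 // => k _.
by rewrite /layerL !mulmxA aB WK ?(ltnW (ltn_ord k)) // oneLap // !mul0mx.
Qed.

Lemma L1 : L *m (const_mx 1 : 'cV[R]_(N 0%N)) = 0.
Proof.
rewrite /hierL mulmx_suml big1 // => k _.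
by rewrite /layerL -!mulmxA Cc1 // Lap1 !mulmx0.
Qed.


Lemma Bsplit j k : (j <= k)%N -> exists P : 'M[R]_(N j, N k), B k = B j *m P.
Proof.
elim: k => [|k IH].
  by rewrite leqn0 => /eqP ->; exists 1%:M; rewrite mulmx1.
rewrite leq_eqVlt => /orP [/eqP ->|Hjk]; first by exists 1%:M; rewrite mulmx1.
by have [P HP] := IH Hjk; exists (P *m G k) => /=; rewrite HP mulmxA.
Qed.

Lemma layer_low k l : (k < M)%N -> (k < l)%N -> layerL R N g a adj C k *m B l = 0.
Proof.
move=> kM kl; have [P HP] := Bsplit (k.+1) l kl.
rewrite /layerL HP /= -!mulmxA (mulmxA (Cc k)) CcB // mul1mx.
by rewrite (mulmxA (Lap k)) LapG // mul0mx !mulmx0.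
Qed.

Lemma layer_eq l : (l < M)%N -> layerL R N g a adj C l *m B l = B l *m (K l *m Lap l).
Proof. by move=> lM; rewrite /layerL -!mulmxA CcB // mulmx1. Qed.

Lemma layer_high k l : (l < k)%N -> exists Z : 'M[R]_(N l.+1, N l),
  layerL R N g a adj C k *m B l = B l.+1 *m Z.
Proof.
move=> lk; have [P HP] := Bsplit (l.+1) k lk.
by exists (P *m (K k *m Lap k *m Cc k *m B l)); rewrite /layerL HP !mulmxA.
Qed.

Lemma LB l : (l < M)%N -> exists Y : 'M[R]_(N l.+1, N l),
  L *m B l = B l *m (K l *m Lap l) + B l.+1 *m Y.
Proof.
move=> Hl.
suff H k0 : (k0 <= M)%N -> exists Y : 'M[R]_(N l.+1, N l),
  (\sum_(k < k0) layerL R N g a adj C k) *m B l =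
  (if (l < k0)%N then B l *m (K l *m Lap l) else 0) + B l.+1 *m Y.
  by have [Y HY] := H M (leqnn M); exists Y; rewrite /hierL HY Hl.
elim: k0 => [|k0 IH] Hk0.
  by exists 0; rewrite big_ord0 mul0mx mulmx0 addr0.
have [Y HY] := IH (ltnW Hk0).
rewrite big_ord_recr mulmxDl HY.
have Hk0M : (k0 < M)%N := Hk0.
have [Hkl|Hkl'] := ltnP k0 l.
  rewrite layer_low // addr0.
  have -> : (l < k0.+1)%N = false by lia.
  have -> : (l < k0)%N = false by lia.
  by exists Y.
have [Hkl|Hkl] := eqVneq k0 l; last first.
  have Hkl2 : (l < k0)%N by lia.
  have [Z ->] := layer_high k0 l Hkl2.
  have -> : (l < k0.+1)%N = true by lia.
  have -> : (l < k0)%N = true by lia.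
  by exists (Y + Z); rewrite [B l.+1 *m (Y + Z)]mulmxDr addrA.
have E : layerL R N g a adj C (@ord_max k0) = layerL R N g a adj C l by rewrite /= Hkl.
rewrite E layer_eq // Hkl ltnSn ltnn.
by exists Y; rewrite add0r addrC.
Qed.

Fixpoint anc l : 'I_(N 0%N) -> 'I_(N l) :=
  match l with 0%N => id | l'.+1 => fun i => g l' (anc l' i) end.

Lemma B_entry l i p : B l i p = (anc l i == p)%:R.
Proof.
elim: l p => [|l IH] p /=; first by rewrite mxE.
rewrite mxE (bigD1 (anc l i)) //= IH eqxx mul1r G_entry big1 ?addr0 // => q qa.
by rewrite IH eq_sym (negbTE qa) mul0r.
Qed.

Lemma Bmap_entry (S : comNzRingType) (f : {rmorphism R -> S}) l m (w : 'M[S]_(N l, m)) i k :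
  (map_mx f (B l) *m w) i k = w (anc l i) k.
Proof.
rewrite mxE (bigD1 (anc l i)) //= !mxE B_entry eqxx rmorph1 mul1r big1 ?addr0 // => q qa.
by rewrite !mxE B_entry eq_sym (negbTE qa) rmorph0 mul0r.
Qed.


Local Notation toC := (real_complex R).
Local Notation MC A := (map_mx toC A).

Lemma Gmap_entry (S : comNzRingType) (f : {rmorphism R -> S}) l m (t : 'M[S]_(N l.+1, m)) i k :
  (map_mx f (G l) *m t) i k = t (g l i) k.
Proof.
rewrite mxE (bigD1 (g l i)) //= !mxE eqxx rmorph1 mul1r big1 ?addr0 // => q qa.
by rewrite !mxE eq_sym (negbTE qa) rmorph0 mul0r.
Qed.

Lemma Kmap_entry (S : comNzRingType) (f : {rmorphism R -> S}) l m (t : 'M[S]_(N l, m)) i k :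
  (map_mx f (K l) *m t) i k = f ((W l i)^-1) * t i k.
Proof. by rewrite /Kmat map_diag_mx mul_diag_mx !mxE. Qed.

Lemma toC_gt0 (x : R) : 0 < x -> 0 < toC x.
Proof. by move=> x0; rewrite ltcE /= eqxx x0. Qed.

Lemma herm_form l (v : 'cV[R[i]]_(N l)) : (l < M)%N ->
  let H := \sum_i conjc (v i 0) * (MC (Lap l) *m v) i 0 in
  0 <= H /\ (H = 0 -> forall i j, g l i = g l j -> v i 0 = v j 0).
Proof.
move=> Hl H.
have H2 : H = \sum_i \sum_j conjc (v i 0) * ((adj l i j)%:R * (v i 0 - v j 0)).
  by rewrite /H; apply: eq_bigr => i _; rewrite Lap_mul mulr_sumr.
have HH : H = \sum_i \sum_j conjc (v j 0) * ((adj l i j)%:R * (v j 0 - v i 0)).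
  rewrite H2 exchange_big /=; apply: eq_bigr => i _; apply: eq_bigr => j _.
  by rewrite (Hsym l Hl i j).
have D : H *+ 2 = \sum_i \sum_j (adj l i j)%:R * ((v i 0 - v j 0) * conjc (v i 0 - v j 0)).
  rewrite mulr2n {1}H2 HH -big_split; apply: eq_bigr => i _.
  rewrite -big_split; apply: eq_bigr => j _ /=.
  rewrite rmorphB /=; ring.
have Dge0 : forall i j, 0 <= (adj l i j)%:R * ((v i 0 - v j 0) * conjc (v i 0 - v j 0)).
  by move=> i j; rewrite mulr_ge0 // mulcJ_ge0.
have H0 : 0 <= H.
  rewrite -(pmulrn_lge0 _ (isT : (0 < 2)%N)) D.
  by apply: sumr_ge0 => i _; apply: sumr_ge0 => j _.
split => // Hz.
have edge i j : adj l i j -> v i 0 = v j 0.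
  move=> e.
  have D0 : \sum_i \sum_j (adj l i j)%:R * ((v i 0 - v j 0) * conjc (v i 0 - v j 0)) = 0.
    by rewrite -D Hz mul0rn.
  have Sge0 k : 0 <= \sum_j (adj l k j)%:R * ((v k 0 - v j 0) * conjc (v k 0 - v j 0)).
    by apply: sumr_ge0 => j' _; exact: Dge0.
  have := psumr_eq0P (fun k _ => Sge0 k) D0 (i:=i) isT.
  move/(psumr_eq0P (fun j _ => Dge0 i j))/(_ j isT).
  rewrite e mul1r => /eqP; rewrite mulf_eq0 conjc_eq0 orbb subr_eq0 => /eqP.
  by [].
move=> i j gij.
have cl : fingraph.closed (adj l) [pred k | v k 0 == v i 0].
  by move=> x y /edge vxy; rewrite !inE vxy.
have := closed_connect cl (Hconn l Hl i j gij).
by rewrite !inE eqxx => /esym /eqP.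
Qed.


Lemma Wc_pos l : (l <= M)%N -> forall i, 0 < toC (W l i).
Proof. by move=> Hl i; apply: toC_gt0; apply: W_pos. Qed.

Lemma Wc_neq0 l : (l <= M)%N -> forall i, toC (W l i) != 0.
Proof. by move=> Hl i; rewrite gt_eqF // Wc_pos. Qed.

Lemma subE (S : zmodType) m n (A B : 'M[S]_(m, n)) i j : (A - B) i j = A i j - B i j.
Proof. by rewrite !mxE. Qed.

Lemma key_step l (z : R[i]) (w : 'cV[R[i]]_(N l)) : (l < M)%N ->
  MC L *m (MC (B l) *m w) = z *: (MC (B l) *m w) ->
  let r := \col_p ((\sum_(i | g l i == p) toC (W l i) * w i 0) / toC (W l.+1 p)) in
  w - MC (G l) *m r != 0 -> 0 < z.
Proof.
move=> Hl Hw r; set v := w - MC (G l) *m r => vn0.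
have [Y HY] := LB l Hl.
have HYc : MC L *m MC (B l) = MC (B l) *m (MC (K l) *m MC (Lap l)) + MC (B l.+1) *m MC Y.
  by rewrite -!map_mxM -map_mxD HY.
have CB : MC (Cc l) *m MC (B l) = 1%:M by rewrite -map_mxM CcB // map_mx1.
have CB1 : MC (Cc l) *m MC (B l.+1) = MC (G l) by rewrite -map_mxM /= mulmxA CcB // mul1mx.
have E1 : MC (K l) *m (MC (Lap l) *m w) + MC (G l) *m (MC Y *m w) = z *: w.
  move: Hw; rewrite mulmxA HYc => Hw.
  have := congr1 (mulmx (MC (Cc l))) Hw.
  rewrite mulmxDl mulmxDr !mulmxA CB CB1 !mul1mx -!mulmxA => ->.
  by rewrite scalemxAr mulmxA CB mul1mx.
have Ei i : toC ((W l i)^-1) * (MC (Lap l) *m w) i 0 + (MC Y *m w) (g l i) 0 = z * w i 0.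
  by have := congr1 (fun A : 'cV[R[i]]_(N l) => A i 0) E1; rewrite /= [LHS]mxE Kmap_entry Gmap_entry [RHS]mxE.
have Lv : MC (Lap l) *m w = MC (Lap l) *m v.
  by rewrite /v mulmxBr mulmxA -map_mxM LapG // map_mx0 mul0mx subr0.
have vE i : v i 0 = w i 0 - r (g l i) 0 by rewrite /v subE Gmap_entry.
have Wl1 p : toC (W l.+1 p) = \sum_(i | g l i == p) toC (W l i) by rewrite /= rmorph_sum.
have S0 p : \sum_(i | g l i == p) toC (W l i) * v i 0 = 0.
  under eq_bigr => i /eqP gi do rewrite vE gi mulrBr.
  rewrite sumrB -mulr_suml -Wl1 /r mxE.
  by rewrite mulrC divfK ?subrr // Wc_neq0.
have orth (t : 'I_(N l.+1) -> R[i]) : \sum_i toC (W l i) * conjc (v i 0) * t (g l i) = 0.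
  rewrite (partition_big (g l) xpredT) //=; apply: big1 => p _.
  under eq_bigr => i /eqP gi do rewrite gi.
  rewrite -mulr_suml.
  have : conjc (\sum_(i | g l i == p) toC (W l i) * v i 0) = 0 by rewrite S0 conjc0.
  rewrite rmorph_sum => H0.
  rewrite (_ : \sum_(i | g l i == p) _ = 0) ?mul0r //.
  by rewrite -[RHS]H0; apply: eq_bigr => i _; rewrite rmorphM /= oppr0.
have Ei' i : conjc (v i 0) * (MC (Lap l) *m v) i 0 + toC (W l i) * conjc (v i 0) * (MC Y *m w) (g l i) 0
    = z * (toC (W l i) * conjc (v i 0) * w i 0).
  have Ei0 := Ei i; rewrite Lv in Ei0.
  rewrite (_ : z * _ = toC (W l i) * conjc (v i 0) * (z * w i 0)); last by ring.
  rewrite -Ei0 fmorphV /=; field.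
  exact: Wc_neq0 (ltnW Hl) i.
set H := \sum_i conjc (v i 0) * (MC (Lap l) *m v) i 0.
set Q := \sum_i toC (W l i) * conjc (v i 0) * v i 0.
have HQ : H = z * Q.
  have : \sum_i (conjc (v i 0) * (MC (Lap l) *m v) i 0 + toC (W l i) * conjc (v i 0) * (MC Y *m w) (g l i) 0)
    = \sum_i z * (toC (W l i) * conjc (v i 0) * w i 0).
    by apply: eq_bigr => i _; exact: Ei' i.
  rewrite big_split /= (orth (fun p => (MC Y *m w) p 0)) addr0 -/H => ->.
  rewrite -mulr_sumr; congr (_ * _).
  have wE i : w i 0 = v i 0 + r (g l i) 0 by rewrite vE subrK.
  under eq_bigr => i _ do rewrite wE mulrDr.
  by rewrite big_split /= (orth (fun p => r p 0)) addr0.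
have [Hge0 Hz] := herm_form l v Hl.
have vnz : exists i, v i 0 != 0.
  case/boolP: [exists i, v i 0 != 0] => [/existsP //|/existsPn vz].
  exfalso; move/negP: vn0; apply; apply/eqP/matrixP => i j.
  by rewrite (ord1 j) [RHS]mxE; apply/eqP/negPn/vz.
have Hn0 : H != 0.
  apply/eqP => /Hz Hc; case: vnz => i; apply/negP; rewrite negbK.
  have := S0 (g l i).
  under eq_bigr => j /eqP gj do rewrite (Hc j i gj).
  by rewrite -mulr_suml -Wl1 => /eqP; rewrite mulf_eq0 (negbTE (Wc_neq0 (l.+1) Hl (g l i))).
have Tge0 k : 0 <= toC (W l k) * conjc (v k 0) * v k 0.
  rewrite -mulrA (mulrC (conjc _)) mulr_ge0 ?mulcJ_ge0 //.
  by rewrite ltW // Wc_pos // ltnW.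
have Qge0 : 0 <= Q by apply: sumr_ge0 => i _; exact: Tge0.
have Qn0 : Q != 0.
  apply/eqP => Q0; case: vnz => i; apply/negP; rewrite negbK.
  have := psumr_eq0P (fun k _ => Tge0 k) Q0 (i:=i) isT.
  move/eqP; rewrite !mulf_eq0 conjc_eq0 (negbTE (Wc_neq0 l (ltnW Hl) i)) /=.
  by case/orP.
have -> : z = H / Q by rewrite HQ mulfK.
by rewrite divr_gt0 // lt_def ?Hn0 ?Hge0 ?Qn0 ?Qge0.
Qed.

Lemma key (z : R[i]) (u : 'cV[R[i]]_(N 0%N)) :
  MC L *m u = z *: u -> 0 < z \/ (forall i j, u i 0 = u j 0).
Proof.
move=> Hu.
suff H d : forall l, (l + d = M)%N -> forall w : 'cV[R[i]]_(N l),
  MC L *m (MC (B l) *m w) = z *: (MC (B l) *m w) ->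
  0 < z \/ (forall i j, (MC (B l) *m w) i 0 = (MC (B l) *m w) j 0).
  by have := H M 0%N (add0n M) u; rewrite /= map_mx1 mul1mx; apply.
elim: d => [|d IH] l Hld w Hw.
  right => i j; rewrite !Bmap_entry.
  have NL : N l = 1%N by rewrite -HNM -Hld addn0.
  congr (w _ 0); apply: val_inj => /=.
  have := ltn_ord (anc l i); have := ltn_ord (anc l j).
  move: (nat_of_ord (anc l i)) (nat_of_ord (anc l j)) => x y; rewrite NL; lia.
have Hl : (l < M)%N by lia.
set r := \col_p ((\sum_(i | g l i == p) toC (W l i) * w i 0) / toC (W l.+1 p)).
case: (eqVneq (w - MC (G l) *m r) 0) => [w0|wn0]; last by left; exact: (@key_step l z w Hl Hw wn0).
have wE : w = MC (G l) *m r by apply/eqP; rewrite -subr_eq0 w0.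
have BE : MC (B l) *m w = MC (B l.+1) *m r by rewrite wE mulmxA -map_mxM.
rewrite BE in Hw *.
by apply: (IH l.+1) Hw; lia.
Qed.


Lemma eig_nonneg (z : R[i]) (u : 'cV[R[i]]_(N 0%N)) : u != 0 -> MC L *m u = z *: u -> 0 <= z.
Proof.
move=> un0 Hu; case: (@key _ _ Hu) => [/ltW //|Hc].
have [i0 ui0] : exists i, u i 0 != 0.
  case/boolP: [exists i, u i 0 != 0] => [/existsP //|/existsPn uz].
  exfalso; move/negP: un0; apply; apply/eqP/matrixP => i j.
  by rewrite (ord1 j) [RHS]mxE; apply/eqP/negPn/uz.
have uE : u = (u i0 0) *: MC (const_mx 1).
  by apply/matrixP => i j; rewrite (ord1 j) !mxE rmorph1 mulr1 (Hc i i0).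
have : z *: u = 0 by rewrite -Hu uE -scalemxAr -map_mxM L1 map_mx0 scaler0.
move/eqP; rewrite scaler_eq0 (negbTE un0) orbF => /eqP ->.
by [].
Qed.

Lemma ker_L (v : 'cV[R]_(N 0%N)) : L *m v = 0 -> forall i j, v i 0 = v j 0.
Proof.
move=> Lv.
have H : MC L *m MC v = 0 *: MC v by rewrite -map_mxM Lv map_mx0 scale0r.
case: (@key _ _ H) => [|Hc i j]; first by rewrite ltxx.
by have := Hc i j; rewrite !mxE => /complexI.
Qed.

Lemma sum_a_pos (i : 'I_(N 0%N)) : 0 < \sum_j a j.
Proof.
rewrite (bigD1 i) //=; apply: (lt_le_trans (Ha i)); rewrite lerDl sumr_ge0 // => k _.
exact: ltW.
Qed.

Lemma ker_L2 (v : 'cV[R]_(N 0%N)) : L *m (L *m v) = 0 -> L *m v = 0.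
Proof.
move=> H; have Hc := @ker_L _ H.
have E : (\row_i a i) *m (L *m v) = 0 by rewrite mulmxA aL mul0mx.
apply/matrixP => i j; rewrite (ord1 j) [RHS]mxE.
have := congr1 (fun A : 'rV[R]_1 => A 0 0) E; rewrite /= [X in X = _ -> _]mxE [X in _ = X -> _]mxE.
under eq_bigr => k _ do rewrite (Hc k i) mxE.
rewrite -mulr_suml => /eqP; rewrite mulf_eq0 (gt_eqF (sum_a_pos i)) /= => /eqP.
by [].
Qed.

Lemma col_mul' m n p (A : 'M[R]_(m, n)) (Bm : 'M[R]_(n, p)) j :
  col j (A *m Bm) = A *m col j Bm.
Proof. by apply/matrixP => i k; rewrite !mxE; apply: eq_bigr => q _; rewrite !mxE. Qed.

Lemma ker_pow k (Q : 'M[R]_(N 0%N)) : L ^+ k.+1 * Q = 0 -> L * Q = 0.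
Proof.
elim: k Q => [|k IH] Q; first by rewrite expr1.
rewrite exprSr -mulrA => /IH H.
apply/matrixP => i j.
have H' : L *m (L *m Q) = 0 := H.
have : L *m (L *m col j Q) = 0 by rewrite -!col_mul' H'; apply/matrixP => p q; rewrite !mxE.
move/(@ker_L2 _) => H2.
move/matrixP/(_ i 0): H2; rewrite -col_mul' => E.
have E' : (L *m Q) i j = 0 by move: E; rewrite !mxE.
by rewrite [RHS]mxE -E'.
Qed.

Lemma L_comm (s : seq R) : L * \prod_(r <- s) (L - r%:M) = \prod_(r <- s) (L - r%:M) * L.
Proof.
elim: s => [|r s IH]; first by rewrite big_nil mulr1 mul1r.
rewrite big_cons mulrA (_ : L * (L - r%:M) = (L - r%:M) * L); last first.
  by rewrite mulrBr mulrBl -!mulmxE scalar_mxC.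
by rewrite -mulrA IH mulrA.
Qed.

Lemma aP (s : seq R) : (\row_i a i) *m \prod_(r <- s) (L - r%:M) = (\prod_(r <- s) (- r)) *: (\row_i a i).
Proof.
elim: s => [|r s IH]; first by rewrite !big_nil scale1r mulmx1.
rewrite !big_cons -mulmxE mulmxA mulmxBr aL sub0r mul_mx_scalar -scaleNr.
by rewrite -scalemxAl IH scalerA.
Qed.



Lemma final (x : R -> 'cV[R]_(N 0%N)) (x0 : 'cV[R]_(N 0%N)) :
  x t @[t --> (0:R)^'+] --> x0 ->
  (forall t : R, 0 < t -> is_derive t 1 x (- (L *m x t))) ->
  let one := const_mx 1 : 'cV[R]_(N 0%N) in
  let Kd := diag_mx (\row_i a i) in
  x t @[t --> +oo] --> ((one^T *m Kd *m one) 0 0)^-1 *: (one *m one^T *m Kd *m x0).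
Proof using All.
move=> Hcont Hder one Kd.
have [k [s [Hs HP]]] := @charfact R _ L eig_nonneg.
set P := \prod_(r <- s) (L - r%:M) in HP.
have LP : L * P = 0.
  case: k HP => [|k] HP; last exact: ker_pow HP.
  by rewrite expr0 mul1r in HP; rewrite HP mulr0.
have PL : P * L = 0 by rewrite /P -L_comm.
have dx : forall t : R, 0 < t -> forall i, is_derive t 1 (fun u => x u i 0) ((- (L *m x t)) i 0).
  by move=> t t0 i; exact: entry_derive (Hder t t0).
have Pconst (t : R) : 0 < t -> P *m x t = P *m x 1.
  move=> t0; apply/matrixP => i j; rewrite (ord1 j).
  apply: (@const_pos R (fun u => (P *m x u) i 0)) => // u u0.
  apply: is_derive_eq; first exact: (@entry_mul_derive _ _ _ P x u _ i (dx u u0)).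
  have PL' : P *m L = 0 := PL.
  by rewrite mulmxN mulmxA PL' mul0mx oppr0 mxE.
have cP : (fun t => P *m x t) @ +oo --> P *m x 1.
  apply/cvgrPdist_le => e e0; exists 0; split => // t t0.
  by rewrite Pconst // subrr normr0 ltW.
have Hlim := @ode_vec R _ L s Hs x (P *m x 1) dx cP.
set kap := (\prod_(r <- s) - r)^-1 in Hlim.
set xinf := kap *: (P *m x 1) in Hlim.
suff -> : ((one^T *m Kd *m one) 0 0)^-1 *: (one *m one^T *m Kd *m x0) = xinf by [].
have Pn0 : \prod_(r <- s) (- r) != 0.
  rewrite prodf_seq_neq0; apply/allP => r rs /=; rewrite oppr_eq0 gt_eqF //.
  exact: (allP Hs r rs).
have LP' : L *m P = 0 := LP.
have Lxinf : L *m xinf = 0 by rewrite /xinf -scalemxAr mulmxA LP' mul0mx scaler0.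
have Hc := @ker_L _ Lxinf.
pose ga u := (\row_i a i *m x u) 0 0.
have dga (u : R) : 0 < u -> is_derive u 1 ga 0.
  move=> u0; apply: is_derive_eq.
    exact: (@entry_mul_derive _ _ _ (\row_i a i) x u _ 0 (dx u u0)).
  by rewrite mulmxN mulmxA aL mul0mx oppr0 mxE.
have gconst := @const_pos R ga dga.
have gcvg0 : ga t @[t --> (0:R)^'+] --> (\row_i a i *m x0) 0 0.
  rewrite /ga mxE; under eq_fun do rewrite mxE.
  apply: cvg_lin => j; exact: entry_cvg Hcont.
have gcvg1 : ga t @[t --> (0:R)^'+] --> ga 1.
  apply/cvgrPdist_le => e e0; near=> t.
  have t0 : 0 < t by near: t; exact: nbhs_right_gt.
  by rewrite gconst // subrr normr0 ltW.
have ga1 : ga 1 = (\row_i a i *m x0) 0 0.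
  exact: (cvg_unique _ gcvg1 gcvg0).
have axinf : (\row_i a i *m xinf) 0 0 = (\row_i a i *m x0) 0 0.
  rewrite /xinf -scalemxAr mulmxA /P aP -scalemxAl scalerA /kap mulVf // scale1r.
  exact: ga1.
have oneK : one^T *m Kd = \row_k a k.
  by apply/rowP => q; rewrite /Kd mul_mx_diag !mxE mul1r.
have sumA : (one^T *m Kd *m one) 0 0 = \sum_k a k.
  by rewrite oneK mxE; apply: eq_bigr => q _; rewrite !mxE mulr1.
apply/matrixP => i j; rewrite (ord1 j).
have num : (one *m one^T *m Kd *m x0) i 0 = (\row_k a k *m x0) 0 0.
  rewrite -(mulmxA one) oneK mxE [RHS]mxE; apply: eq_bigr => q _.
  by rewrite !mxE big_ord1 !mxE mul1r.
have xs : (\row_k a k *m xinf) 0 0 = (\sum_k a k) * xinf i 0.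
  by rewrite mxE mulr_suml; apply: eq_bigr => q _; rewrite mxE (Hc q i).
rewrite mxE sumA num -axinf xs mulKf //.
by rewrite gt_eqF // (sum_a_pos i).
Unshelve. all: by end_near.
Qed.

End Hier.

Theorem theorem3 (R : realType) (M : nat) (N : nat -> nat)
  (g : forall l, 'I_(N l) -> 'I_(N l.+1))
  (a : 'I_(N 0%N) -> R)
  (adj : forall l, rel 'I_(N l))
  (C : forall l, 'M[R]_(N l.+1, N l))
  (x : R -> 'cV[R]_(N 0%N)) (x0 : 'cV[R]_(N 0%N)) :
  (2 <= M)%N ->
  N M = 1%N ->
  (* groups: consecutive numbering, each group nonempty *)
  (forall l, (l < M)%N -> forall i j : 'I_(N l), (i <= j)%N -> (g l i <= g l j)%N) ->
  (forall l, (l < M)%N -> forall p : 'I_(N l.+1), exists i, g l i = p) ->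
  (* each group carries a connected undirected simple graph *)
  (forall l, (l < M)%N -> symmetric (adj l)) ->
  (forall l, (l < M)%N -> irreflexive (adj l)) ->
  (forall l, (l < M)%N -> forall i j, adj l i j -> g l i = g l j) ->
  (forall l, (l < M)%N -> forall i j, g l i = g l j -> connect (adj l) i j) ->
  (* positive weights *)
  (forall i, 0 < a i) ->
  (* C^(l)_p : nonnegative entries summing to 1, supported on group p *)
  (forall l, (l.+1 < M)%N -> forall p i, 0 <= C l p i) ->
  (forall l, (l.+1 < M)%N -> forall p i, g l i != p -> C l p i = 0) ->
  (forall l, (l.+1 < M)%N -> forall p, \sum_i C l p i = 1) ->
  (* x solves xdot = - L x on [0, oo) with x(0) = x0 *)
  x 0 = x0 ->
  x t @[t --> (0:R)^'+] --> x0 ->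
  (forall t : R, 0 < t -> is_derive t 1 x (- (hierL R N g a adj C M *m x t))) ->
  let one := const_mx 1 : 'cV[R]_(N 0%N) in
  let K := diag_mx (\row_i a i) in
  x t @[t --> +oo] -->
    ((one^T *m K *m one) 0 0)^-1 *: (one *m one^T *m K *m x0).
Proof.
move=> _ HNM _ Hsurj Hsym _ Hgrp Hconn Ha _ HCs HC1 _ Hcont Hder.
exact: (@final R M N g a adj C HNM Hsurj Hsym Hgrp Hconn Ha HCs HC1 x x0 Hcont Hder).
Qed.
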